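(* For every finite simple graph $G$, $\mathrm{SEDF}^0(G)\subseteq \mathrm{SEDF}(G)$.
   Context: For a simple graph $G$ and $f:E(G)\to\{1,-1\}$, write $f(v)=\sum_{e\in E_G(v)}f(e)$ for $v\in V(G)$, where $E_G(v)$ is the set of edges incident with $v$. $\mathrm{SEDF}(G)$ is the set of functions $f:E(G)\to\{1,-1\}$ with $\sum_{e'\in N[e]}f(e')\ge1$ for every edge $e=uv$, where $N[e]=E_G(u)\cup E_G(v)$. $\mathrm{SEDF}^0(G)$ is the set of functions $f:E(G)\to\{1,-1\}$ such that (a) $f(v)\ge 0$ for all $v\in V(G)$, and (b) $f(u)+f(v)\ge 2$ for every edge $e=uv$ with $f(e)=1$. *)

(* Defs.v *)
From mathcomp Require Import all_boot all_order all_algebra.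
Set Implicit Arguments. Unset Strict Implicit. Unset Printing Implicit Defensive.
Import Order.TTheory GRing.Theory Num.Theory.
Local Open Scope ring_scope.

(* A finite simple graph: vertex set a finType V, adjacency a symmetric
   irreflexive boolean relation. An edge uv is represented as the 2-set [set u; v]. *)
Definition simple_graph (V : finType) (adj : rel V) : Prop :=
  symmetric adj /\ irreflexive adj.

Definition edges (V : finType) (adj : rel V) : {set {set V}} :=
  [set e : {set V} | [exists u, exists v, adj u v && (e == [set u; v])]].

(* edge functions E(G) -> {1,-1}; only values on edges matter *)
Definition signed_on (V : finType) (adj : rel V) (f : {set V} -> int) : Prop :=
  forall e, e \in edges adj -> f e = 1 \/ f e = -1.

Definition fv (V : finType) (adj : rel V) (f : {set V} -> int) (v : V) : int :=
  \sum_(e in edges adj | v \in e) f e.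

(* sum of f over N[e] = E(u) ∪ E(v) for e = uv, i.e. edges meeting e *)
Definition fN (V : finType) (adj : rel V) (f : {set V} -> int) (e : {set V}) : int :=
  \sum_(e' in edges adj | e' :&: e != set0) f e'.

Definition SEDF (V : finType) (adj : rel V) (f : {set V} -> int) : Prop :=
  signed_on adj f /\ forall e, e \in edges adj -> 1 <= fN adj f e.

Definition SEDF0 (V : finType) (adj : rel V) (f : {set V} -> int) : Prop :=
  signed_on adj f /\
  (forall v, 0 <= fv adj f v) /\
  (forall u v, adj u v -> f [set u; v] = 1 -> 2 <= fv adj f u + fv adj f v).

(* Main.v *)
Require Import Defs.
From mathcomp Require Import all_boot all_order all_algebra.
From mathcomp Require Import zify.
Set Implicit Arguments. Unset Strict Implicit. Unset Printing Implicit Defensive.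
Import Order.TTheory GRing.Theory Num.Theory.
Local Open Scope ring_scope.

Lemma meet2 (V : finType) (A : {set V}) u v :
  (A :&: [set u; v] != set0) = (u \in A) || (v \in A).
Proof.
apply/idP/idP.
- case/set0Pn=> x; rewrite !inE => /andP[xA /orP[] /eqP xu]; by rewrite -xu xA ?orbT.
- move=> H; apply/set0Pn; case/orP: H => H; [exists u | exists v];
  by rewrite !inE H eqxx ?orbT.
Qed.

Lemma edge_uniq (V : finType) (adj : rel V) e' u v : u != v ->
  e' \in edges adj -> u \in e' -> v \in e' -> e' = [set u; v].
Proof.
move=> uv; rewrite inE => /existsP[a /existsP[b /andP[_ /eqP ->]]].
rewrite !inE => /orP[]/eqP hu /orP[]/eqP hv; subst; rewrite ?eqxx // in uv *.
by rewrite setUC.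
Qed.

Lemma fN_split (V : finType) (adj : rel V) (f : {set V} -> int) u v :
  u != v -> adj u v ->
  fN adj f [set u; v] = fv adj f u + fv adj f v - f [set u; v].
Proof.
move=> uv huv.
have Ee : [set u; v] \in edges adj.
  by rewrite inE; apply/existsP; exists u; apply/existsP; exists v; rewrite huv eqxx.
have -> : f [set u; v] = \sum_(e' in edges adj | (u \in e') && (v \in e')) f e'.
  symmetry; apply: big_pred1 => e' /=.
  apply/idP/eqP.
  - by case/andP=> E /andP[hu hv]; apply: (edge_uniq uv E hu hv).
  - by move=> ->; rewrite Ee !inE !eqxx orbT.
rewrite /fN /fv !big_mkcondr /=.
rewrite -big_split -sumrB /=; apply: eq_bigr => e' _.
rewrite meet2; case: (u \in e'); case: (v \in e') => /=; lia.
Qed.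

Theorem lemma2p1 (V : finType) (adj : rel V) (f : {set V} -> int) :
  simple_graph adj -> SEDF0 adj f -> SEDF adj f.
Proof.
move=> [sym irr] [sg [nn h2]]; split => // e Ee.
have Ee' := Ee.
move: Ee'; rewrite inE => /existsP[u /existsP[v /andP[huv /eqP ee]]].
have uv : u != v by apply/eqP => E; rewrite E irr in huv.
rewrite ee fN_split //.
have := nn u; have := nn v.
case: (sg e Ee) => fe; rewrite -ee fe.
- have := h2 u v huv; rewrite -ee => /(_ fe); lia.
- lia.
Qed.
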